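(* Let $\hat\gamma\in M_1(\rho_*,\rho^* )$, and let $\mu$ be a smooth density with $h(\mu_0;\hat\gamma)<\infty$ and $I_0(\mu)<\infty$ satisfying properties (i)-(iv). Then $\lim_{|y|\to\infty}\sup_{t\in[0,T]}|\mu(t,y)-\hat\gamma(y)|=0$.
   Context: $T>0$ fixed; $M_1$ = measurable functions $\mathbb R\to[0,1]$; for $0<\rho_*,\rho^*<1$, $M_1(\rho_*,\rho^* )$ is the set of $\gamma\in M_1$ equal to $\rho_*$ on $(-\infty,x_*]$ and $\rho^*$ on $[x^*,\infty)$ for some $x_*\le x^*$. A density is $\mu\in D([0,T];M_1)$. $I_0(\mu)=\sup_{G\in C^{1,2}_K([0,T]\times\mathbb R)}\{\int G(T,\cdot)\mu_T-\int G(0,\cdot)\mu_0-\int_0^T\int\mu(\partial_t+\frac12\partial_x^2)G-\frac12\int_0^T\int\mu(1-\mu)G_x^2\}$; $h(\mu_0;\hat\gamma)=\int[\mu_0\log(\mu_0/\hat\gamma)+(1-\mu_0)\log((1-\mu_0)/(1-\hat\gamma))]dx$. Properties (i)-(iv): (i) $\delta\le\mu\le1-\delta$ on $[0,T]\times\mathbb R$ for some $\delta\in(0,1)$; (ii) $\mu\in C^\infty([0,T]\times\mathbb R)$; (iii) $\partial_t\mu=\frac12\partial_{xx}\mu-\partial_x[H_x\mu(1-\mu)]$ with $H_x\in C^\infty_K([0,T]\times\mathbb R)$; (iv) $\|\partial_x^k\partial_t^l\mu\|_{L^\infty([0,T]\times\mathbb R)}<\infty$ for $k,l\ge1$. *)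

(* Defs.v *)
From Stdlib Require Import Reals Lra.
Open Scope R_scope.

Definition outer_le (A : R -> Prop) (c : R) : Prop :=
  forall eps, 0 < eps ->
  exists a b : nat -> R,
    (forall n, a n <= b n) /\
    (forall x, A x -> exists n, a n < x < b n) /\
    (forall N, sum_f_R0 (fun n => b n - a n) N <= c + eps).

Definition outer_is (A : R -> Prop) (v : R) : Prop :=
  outer_le A v /\ forall c, outer_le A c -> v <= c.

Definition null_set (A : R -> Prop) : Prop := outer_le A 0.

Definition leb_measurable_set (A : R -> Prop) : Prop :=
  forall (E : R -> Prop) (c : R), outer_le E c ->
    exists c1 c2, outer_le (fun x => E x /\ A x) c1 /\
                  outer_le (fun x => E x /\ ~ A x) c2 /\ c1 + c2 <= c.

Definition leb_measurable_fun (f : R -> R) : Prop :=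
  forall a, leb_measurable_set (fun x => a < f x).

(* Finiteness of the Lebesgue integral of a (a.e.) nonnegative measurable f,
   via the layer-cake formula  int f = int_0^oo |{f > s}| ds, expressed as
   boundedness of the lower sums  sum_k (s_{k+1}-s_k) |{f > s_{k+1}}|. *)
Definition nonneg_integral_finite (f : R -> R) : Prop :=
  (forall s, 0 < s -> exists v, outer_is (fun x => s < f x) v) /\
  exists M, forall (n : nat) (s v : nat -> R),
    s 0%nat = 0 ->
    (forall k, (k <= n)%nat -> s k < s (S k)) ->
    (forall k, (k <= n)%nat -> outer_is (fun x => s (S k) < f x) (v (S k))) ->
    sum_f_R0 (fun k => (s (S k) - s k) * v (S k)) n <= M.

Definition in_M1 (g : R -> R) : Prop :=
  leb_measurable_fun g /\ forall x, 0 <= g x <= 1.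

Definition in_M1_rho (rho_lo rho_hi : R) (g : R -> R) : Prop :=
  in_M1 g /\
  exists xlo xhi, xlo <= xhi /\
    (forall x, x <= xlo -> g x = rho_lo) /\
    (forall x, xhi <= x -> g x = rho_hi).

(* pointwise integrand (with Stdlib's total ln; values on the set where the
   true integrand is +oo are irrelevant since that set is required null) *)
Definition entropy_density (mu0 g : R -> R) (x : R) : R :=
  mu0 x * ln (mu0 x / g x) + (1 - mu0 x) * ln ((1 - mu0 x) / (1 - g x)).

Definition entropy_infinite_set (mu0 g : R -> R) (x : R) : Prop :=
  (0 < mu0 x /\ g x = 0) \/ (mu0 x < 1 /\ g x = 1).

Definition entropy_finite (mu0 g : R -> R) : Prop :=
  null_set (entropy_infinite_set mu0 g) /\
  nonneg_integral_finite (entropy_density mu0 g).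

Definition continuous2 (f : R -> R -> R) : Prop :=
  forall t x eps, 0 < eps -> exists d, 0 < d /\
    forall s y, Rabs (s - t) < d -> Rabs (y - x) < d ->
      Rabs (f s y - f t x) < eps.

(* D k l = d_x^k d_t^l f ; all jointly continuous: f is C^oo *)
Definition smooth_family (f : R -> R -> R) (D : nat -> nat -> R -> R -> R) : Prop :=
  (forall t x, D 0%nat 0%nat t x = f t x) /\
  (forall k l t x, derivable_pt_lim (fun y => D k l t y) x (D (S k) l t x)) /\
  (forall k l t x, derivable_pt_lim (fun s => D k l s x) t (D k (S l) t x)) /\
  (forall k l, continuous2 (D k l)).

Definition smooth2 (f : R -> R -> R) : Prop := exists D, smooth_family f D.

Definition compact_support_strip (T : R) (f : R -> R -> R) : Prop :=
  exists L, forall t x, 0 <= t <= T -> L < Rabs x -> f t x = 0.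

Definition C12K (T : R) (G Gt Gx Gxx : R -> R -> R) : Prop :=
  (forall t x, derivable_pt_lim (fun s => G s x) t (Gt t x)) /\
  (forall t x, derivable_pt_lim (fun y => G t y) x (Gx t x)) /\
  (forall t x, derivable_pt_lim (fun y => Gx t y) x (Gxx t x)) /\
  continuous2 G /\ continuous2 Gt /\ continuous2 Gx /\ continuous2 Gxx /\
  compact_support_strip T G.

Definition riem1 (f : R -> R) (a b v : R) : Prop :=
  exists pr : Riemann_integrable f a b, RiemannInt pr = v.

Definition riem2 (g : R -> R -> R) (a b c d v : R) : Prop :=
  exists inner : R -> R,
    (forall t, a <= t <= b -> riem1 (g t) c d (inner t)) /\ riem1 inner a b v.

Definition I0_finite (T : R) (mu : R -> R -> R) : Prop :=
  exists M, forall G Gt Gx Gxx, C12K T G Gt Gx Gxx ->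
    forall L, (forall t x, 0 <= t <= T -> L < Rabs x -> G t x = 0) ->
    forall v1 v2 v3 v4,
      riem1 (fun x => G T x * mu T x) (- L) L v1 ->
      riem1 (fun x => G 0 x * mu 0 x) (- L) L v2 ->
      riem2 (fun t x => mu t x * (Gt t x + / 2 * Gxx t x)) 0 T (- L) L v3 ->
      riem2 (fun t x => mu t x * (1 - mu t x) * (Gx t x) ^ 2) 0 T (- L) L v4 ->
      v1 - v2 - v3 - / 2 * v4 <= M.

(* Main.v *)
Require Import Defs.
From Stdlib Require Import Reals Lra Lia Psatz Classical FunctionalExtensionality ClassicalEpsilon.
Open Scope R_scope.

Lemma cont_pt_of (f : R -> R) x :
  (forall eps, 0 < eps -> exists d, 0 < d /\ forall y, Rabs (y - x) < d -> Rabs (f y - f x) < eps) ->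
  continuity_pt f x.
Proof.
  intros H eps Heps. destruct (H eps Heps) as [d [Hd H2]]. exists d. split; [lra|].
  intros y [_ Hy]. simpl in *. unfold R_dist in *. apply H2; auto.
Qed.

Lemma deriv_cont (f : R -> R) x l : derivable_pt_lim f x l -> continuity_pt f x.
Proof. intros H. apply derivable_continuous_pt. exists l. exact H. Qed.

Lemma deriv_local (f g : R -> R) x l d : 0 < d ->
  (forall z, Rabs (z - x) < d -> f z = g z) ->
  derivable_pt_lim f x l -> derivable_pt_lim g x l.
Proof.
  intros Hd Heq H eps Heps. destruct (H eps Heps) as [del Hdel].
  assert (Hm : 0 < Rmin del d) by (apply Rmin_pos; [apply cond_pos|lra]).
  exists (mkposreal _ Hm). intros h Hh Hh2. simpl in Hh2.
  rewrite <- (Heq (x+h)), <- (Heq x).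
  - apply Hdel; auto. apply Rlt_le_trans with (1:=Hh2). apply Rmin_l.
  - replace (x - x) with 0 by ring. rewrite Rabs_R0. lra.
  - replace (x + h - x) with h by ring. apply Rlt_le_trans with (1:=Hh2). apply Rmin_r.
Qed.

Lemma T1 (f : R -> R) x l h0 : derivable_pt_lim f x l -> 0 < h0 ->
  (forall h, 0 < h <= h0 -> f x <= f (x - h)) -> l <= 0.
Proof.
  intros H Hh0 Hmin. destruct (Rle_dec l 0) as [|Hl]; auto. exfalso.
  assert (Hl' : 0 < l) by lra.
  destruct (H l Hl') as [del Hdel].
  set (h := Rmin (del/2) h0).
  assert (Hhp : 0 < h) by (unfold h; apply Rmin_pos; [pose proof (cond_pos del); lra|lra]).
  assert (Hhd : h <= del/2) by apply Rmin_l.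
  assert (Hhh : h <= h0) by apply Rmin_r.
  pose proof (cond_pos del).
  specialize (Hdel (-h)). assert (Hne : -h <> 0) by lra.
  assert (Ha : Rabs (-h) < del) by (rewrite Rabs_Ropp, Rabs_pos_eq; lra).
  specialize (Hdel Hne Ha). specialize (Hmin h (conj Hhp Hhh)).
  replace (x + - h) with (x - h) in Hdel by ring.
  assert (Hq : (f (x - h) - f x) / - h <= 0).
  { unfold Rdiv. assert (/ - h < 0) by (apply Rinv_lt_0_compat; lra). nra. }
  apply Rabs_def2 in Hdel. lra.
Qed.

Lemma T2 (f f1 : R -> R) x l h0 :
  (forall w, derivable_pt_lim f w (f1 w)) -> derivable_pt_lim f1 x l -> f1 x <= 0 -> 0 < h0 ->
  (forall h, 0 < h <= h0 -> f x <= f (x + h)) -> 0 <= l.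
Proof.
  intros Hf H Hf1 Hh0 Hmin. destruct (Rle_dec 0 l) as [|Hl]; auto. exfalso.
  assert (Hl' : 0 < - l / 2) by lra.
  destruct (H _ Hl') as [del Hdel]. pose proof (cond_pos del).
  set (h := Rmin (del/2) h0).
  assert (Hhp : 0 < h) by (unfold h; apply Rmin_pos; lra).
  assert (Hhd : h <= del/2) by apply Rmin_l.
  assert (Hhh : h <= h0) by apply Rmin_r.
  destruct (MVT_cor2 f f1 x (x+h)) as [c [Hc1 Hc2]]; [lra| intros; apply Hf |].
  specialize (Hdel (c - x)). assert (Hne : c - x <> 0) by lra.
  assert (Ha : Rabs (c - x) < del) by (rewrite Rabs_pos_eq; lra).
  specialize (Hdel Hne Ha). replace (x + (c - x)) with c in Hdel by ring.
  apply Rabs_def2 in Hdel. destruct Hdel as [Hd1 Hd2].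
  assert (Hq : (f1 c - f1 x) / (c - x) < 0) by lra.
  assert (Hfc : f1 c < 0).
  { assert (Hcx : 0 < c - x) by lra.
    assert (f1 c - f1 x < 0).
    { apply (Rmult_lt_reg_r (/ (c - x))). apply Rinv_0_lt_compat; lra. rewrite Rmult_0_l. exact Hq. }
    lra. }
  specialize (Hmin h (conj Hhp Hhh)).
  assert (f1 c * (x + h - x) < 0). { apply Rmult_neg_pos; lra. }
  lra.
Qed.

Lemma mvt_bound (g g' : R -> R) a b K : a <= b ->
  (forall y, a <= y <= b -> derivable_pt_lim g y (g' y)) ->
  (forall y, a <= y <= b -> Rabs (g' y) <= K) -> Rabs (g b - g a) <= K * (b - a).
Proof.
  intros Hab Hd Hb. destruct (Req_dec a b) as [->|Hne].
  - replace (g b - g b) with 0 by ring. rewrite Rabs_R0. lra.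
  - destruct (MVT_cor2 g g' a b) as [c [Hc1 Hc2]]; [lra|auto|].
    rewrite Hc1, Rabs_mult, (Rabs_pos_eq (b - a)) by lra.
    apply Rmult_le_compat_r; [lra|]. apply Hb; lra.
Qed.

Lemma real_ind (P : R -> R -> Prop) a b : a <= b ->
  (forall u v w, u <= v <= w -> P u v -> P v w -> P u w) ->
  (forall y, a <= y <= b -> exists d, 0 < d /\ forall u v, y - d < u <= y -> y <= v < y + d -> P u v) ->
  P a b.
Proof.
  intros Hab Hadd Hloc.
  set (E := fun x => a <= x <= b /\ P a x).
  assert (HPaa : P a a).
  { destruct (Hloc a) as [d [Hd Hd2]]; [lra|]. apply Hd2; lra. }
  assert (Hb : bound E) by (exists b; intros x [Hx _]; lra).
  assert (He : exists x, E x) by (exists a; split; [lra|auto]).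
  destruct (completeness E Hb He) as [s [Hub Hlub]].
  assert (Has : a <= s) by (apply Hub; split; [lra|auto]).
  assert (Hsb : s <= b) by (apply Hlub; intros x [Hx _]; lra).
  destruct (Hloc s (conj Has Hsb)) as [d [Hd Hd2]].
  assert (Hx : exists x, E x /\ s - d < x).
  { apply NNPP. intro Hn. assert (s <= s - d); [|lra].
    apply Hlub. intros x Ex. destruct (Rle_dec x (s - d)) as [|Hc]; auto.
    exfalso. apply Hn. exists x. split; auto; lra. }
  destruct Hx as [x [[Hx1 Hx2] Hx3]].
  assert (Hxs : x <= s) by (apply Hub; split; auto).
  set (v := Rmin b (s + d/2)).
  assert (Hv1 : v <= b) by apply Rmin_l.
  assert (Hv2 : v <= s + d/2) by apply Rmin_r.
  assert (Hv3 : s <= v) by (unfold v; apply Rmin_glb; lra).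
  assert (HPav : P a v).
  { apply Hadd with x; [lra|auto|]. apply Hd2; lra. }
  assert (Hvs : v <= s) by (apply Hub; split; [lra|auto]).
  destruct (Req_dec s b) as [Hsb'|Hsb'].
  - replace b with v; auto. unfold v. rewrite Hsb'. apply Rmin_left. lra.
  - exfalso. unfold v in Hvs. unfold Rmin in Hvs. destruct (Rle_dec b (s + d/2)); lra.
Qed.

Lemma UC (z : R -> R -> R) t0 a b eps : continuous2 z -> a <= b -> 0 < eps ->
  exists del, 0 < del /\ forall s x, Rabs (s - t0) < del -> a <= x <= b ->
    Rabs (z s x - z t0 x) < eps.
Proof.
  intros Hc Hab He.
  apply (real_ind (fun u v => exists del, 0 < del /\ forall s x, Rabs (s - t0) < del -> u <= x <= v ->
    Rabs (z s x - z t0 x) < eps)); auto.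
  - intros u v w Huvw [d1 [Hd1 H1]] [d2 [Hd2 H2]]. exists (Rmin d1 d2). split.
    + apply Rmin_pos; auto.
    + intros s x Hs Hx. destruct (Rle_dec x v).
      * apply H1; [apply Rlt_le_trans with (1:=Hs); apply Rmin_l|lra].
      * apply H2; [apply Rlt_le_trans with (1:=Hs); apply Rmin_r|lra].
  - intros y Hy. destruct (Hc t0 y (eps/2)) as [d [Hd H]]; [lra|].
    exists d. split; auto. intros u v Hu Hv. exists d. split; auto.
    intros s x Hs Hx.
    assert (Hxy : Rabs (x - y) < d) by (apply Rabs_def1; lra).
    pose proof (H s x Hs Hxy) as A1.
    assert (Ht : Rabs (t0 - t0) < d) by (replace (t0 - t0) with 0 by ring; rewrite Rabs_R0; lra).
    pose proof (H t0 x Ht Hxy) as A2.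
    apply Rabs_def2 in A1. apply Rabs_def2 in A2. apply Rabs_def1; lra.
Qed.

Lemma maxp (z zt zx zxx : R -> R -> R) T a b :
  0 < T -> a < b -> continuous2 z ->
  (forall t x, derivable_pt_lim (fun s => z s x) t (zt t x)) ->
  (forall t x, derivable_pt_lim (fun w => z t w) x (zx t x)) ->
  (forall t x, derivable_pt_lim (fun w => zx t w) x (zxx t x)) ->
  (forall t x, 0 < t <= T -> a < x < b -> / 2 * zxx t x < zt t x) ->
  (forall x, a <= x <= b -> 0 <= z 0 x) ->
  (forall t, 0 <= t <= T -> 0 <= z t a /\ 0 <= z t b) ->
  forall t x, 0 <= t <= T -> a <= x <= b -> 0 <= z t x.
Proof.
  intros HT Hab Hc Hzt Hzx Hzxx Hpde Hinit Hbd.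
  assert (Hxm : forall t, exists mx, (forall c, a <= c <= b -> z t mx <= z t c) /\ a <= mx <= b).
  { intro t. apply continuity_ab_min; [lra|]. intros c _. eapply deriv_cont. apply Hzx. }
  pose (xm := fun t => proj1_sig (constructive_indefinite_description _ (Hxm t))).
  assert (Hxms : forall t, (forall c, a <= c <= b -> z t (xm t) <= z t c) /\ a <= xm t <= b).
  { intro t. unfold xm. destruct (constructive_indefinite_description _ (Hxm t)). simpl. auto. }
  pose (g := fun t => z t (xm t)).
  assert (Hgc : forall t, continuity_pt g t).
  { intro t. apply cont_pt_of. intros eps Heps.
    destruct (UC z t a b (eps/2) Hc ltac:(lra) ltac:(lra)) as [d [Hd H]].
    exists d. split; auto. intros s Hs. unfold g.
    destruct (Hxms s) as [Hs1 Hs2]. destruct (Hxms t) as [Ht1 Ht2].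
    pose proof (H s (xm s) Hs Hs2) as A1. pose proof (H s (xm t) Hs Ht2) as A2.
    pose proof (Hs1 (xm t) Ht2). pose proof (Ht1 (xm s) Hs2).
    apply Rabs_def2 in A1. apply Rabs_def2 in A2. apply Rabs_def1; lra. }
  destruct (continuity_ab_min g 0 T ltac:(lra) (fun c _ => Hgc c)) as [ts [Hts1 Hts2]].
  set (xs := xm ts).
  assert (Hglob : forall t x, 0 <= t <= T -> a <= x <= b -> z ts xs <= z t x).
  { intros t x Ht Hx. apply Rle_trans with (g t). apply Hts1; auto.
    unfold g. apply (proj1 (Hxms t)); auto. }
  intros t x Ht Hx. apply Rle_trans with (z ts xs); [|apply Hglob; auto].
  destruct (Rle_dec 0 (z ts xs)) as [|Hneg]; auto. exfalso.
  assert (Hxs : a <= xs <= b) by (apply (proj2 (Hxms ts))).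
  assert (Hts0 : 0 < ts).
  { destruct (Req_dec ts 0) as [E|E]; [|lra]. rewrite E in Hneg. pose proof (Hinit xs Hxs). lra. }
  assert (Hxa : a < xs).
  { destruct (Req_dec xs a) as [E|E]; [|lra]. rewrite E in Hneg. pose proof (Hbd ts Hts2). lra. }
  assert (Hxb : xs < b).
  { destruct (Req_dec xs b) as [E|E]; [|lra]. rewrite E in Hneg. pose proof (Hbd ts Hts2). lra. }
  assert (Ht1 : zt ts xs <= 0).
  { apply (T1 (fun s => z s xs) ts _ ts); auto. intros h Hh. apply Hglob; lra. }
  assert (Hx1 : zx ts xs <= 0).
  { apply (T1 (fun w => z ts w) xs _ (xs - a)); auto; [lra|]. intros h Hh. apply Hglob; lra. }
  assert (Hx2 : 0 <= zxx ts xs).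
  { apply (T2 (fun w => z ts w) (fun w => zx ts w) xs _ (b - xs)); auto; [lra|].
    intros h Hh. apply Hglob; lra. }
  pose proof (Hpde ts xs ltac:(lra) ltac:(lra)). lra.
Qed.

Lemma cont_pt_to (f : R -> R) x : continuity_pt f x ->
  forall eps, 0 < eps -> exists d, 0 < d /\ forall y, Rabs (y - x) < d -> Rabs (f y - f x) < eps.
Proof.
  intros H eps Heps. destruct (H eps Heps) as [d [Hd H2]]. exists d. split; [lra|].
  intros y Hy. destruct (Req_dec y x) as [->|Hne].
  - replace (f x - f x) with 0 by ring. rewrite Rabs_R0; lra.
  - apply (H2 y). split; [split; [exact I| auto]|]. simpl. unfold R_dist. exact Hy.
Qed.

Lemma cont2_PQ (P Q : R -> R) (u : R -> R -> R) :
  (forall t, continuity_pt P t) -> (forall x, continuity_pt Q x) -> continuous2 u ->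
  continuous2 (fun s x => P s + Q x - u s x).
Proof.
  intros HP HQ Hu t x eps Heps.
  destruct (Hu t x (eps/3)) as [d0 [Hd0 H0]]; [lra|].
  destruct (cont_pt_to P t (HP t) (eps/3)) as [d1 [Hd1 H1]]; [lra|].
  destruct (cont_pt_to Q x (HQ x) (eps/3)) as [d2 [Hd2 H2]]; [lra|].
  exists (Rmin d0 (Rmin d1 d2)). split; [repeat apply Rmin_pos; auto|].
  intros s w Hs Hw.
  assert (Hm1 : Rmin d0 (Rmin d1 d2) <= d0) by apply Rmin_l.
  assert (Hm2 : Rmin d0 (Rmin d1 d2) <= d1) by (eapply Rle_trans; [apply Rmin_r|apply Rmin_l]).
  assert (Hm3 : Rmin d0 (Rmin d1 d2) <= d2) by (eapply Rle_trans; [apply Rmin_r|apply Rmin_r]).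
  pose proof (H0 s w ltac:(lra) ltac:(lra)) as A0.
  pose proof (H1 s ltac:(lra)) as A1. pose proof (H2 w ltac:(lra)) as A2.
  apply Rabs_def2 in A0. apply Rabs_def2 in A1. apply Rabs_def2 in A2. apply Rabs_def1; lra.
Qed.

Lemma dl_lin (f : R -> R) x l al be :
  derivable_pt_lim f x l -> derivable_pt_lim (fun s => al + be * s - f s) x (be - l).
Proof.
  intros H.
  assert (H2 : derivable_pt_lim ((fct_cte al + mult_real_fct be id) - f)%F x (0 + be * 1 - l)).
  { apply derivable_pt_lim_minus; auto. apply derivable_pt_lim_plus.
    apply derivable_pt_lim_const. apply derivable_pt_lim_scal. apply derivable_pt_lim_id. }
  replace (be - l) with (0 + be * 1 - l) by ring. exact H2.
Qed.

Lemma dl_quad (f : R -> R) x l al be y :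
  derivable_pt_lim f x l ->
  derivable_pt_lim (fun w => al + be * ((w - y) * (w - y)) - f w) x (be * (2 * (x - y)) - l).
Proof.
  intros H.
  pose proof (derivable_pt_lim_minus id (fct_cte y) x _ _ (derivable_pt_lim_id x) (derivable_pt_lim_const y x)) as Hm.
  pose proof (derivable_pt_lim_mult _ _ x _ _ Hm Hm) as Hmm.
  pose proof (derivable_pt_lim_scal _ be x _ Hmm) as Hs.
  pose proof (derivable_pt_lim_plus _ _ x _ _ (derivable_pt_lim_const al x) Hs) as Hp.
  pose proof (derivable_pt_lim_minus _ _ x _ _ Hp H) as H2.
  unfold minus_fct, plus_fct, mult_fct, mult_real_fct, fct_cte, id in H2.
  replace (be * (2 * (x - y)) - l) with (0 + be * ((1 - 0) * (x - y) + (x - y) * (1 - 0)) - l) by ring.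
  exact H2.
Qed.

Lemma deriv_ext (f g : R -> R) x l : (forall w, f w = g w) ->
  derivable_pt_lim f x l -> derivable_pt_lim g x l.
Proof. intros E H. apply (deriv_local f g x l 1); auto; lra. Qed.

Lemma compare (u ut ux uxx : R -> R -> R) T y D c :
  0 < T -> 0 < D -> 0 <= c -> continuous2 u ->
  (forall t x, derivable_pt_lim (fun s => u s x) t (ut t x)) ->
  (forall t x, derivable_pt_lim (fun w => u t w) x (ux t x)) ->
  (forall t x, derivable_pt_lim (fun w => ux t w) x (uxx t x)) ->
  (forall t x, 0 <= t <= T -> y - D <= x <= y + D -> ut t x = / 2 * uxx t x) ->
  (forall t x, 0 <= t <= T -> y - D <= x <= y + D -> u t x <= 1) ->
  (forall x, y - D <= x <= y + D -> u 0 x <= c) ->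
  forall t, 0 <= t <= T -> u t y <= c + t / (D * D).
Proof.
  intros HT HD Hc Hu Hut Hux Huxx Hpde Hle1 Hinit t Ht.
  destruct (Rle_dec (u t y) (c + t / (D * D))) as [|Hn]; auto. exfalso.
  set (k := (u t y - c - t / (D * D)) / (2 * (T + 1))).
  assert (Hk : 0 < k) by (unfold k; apply Rdiv_lt_0_compat; lra).
  assert (HDD : 0 < D * D) by nra.
  set (iD := / (D * D)).
  assert (HiD : 0 < iD) by (unfold iD; apply Rinv_0_lt_compat; auto).
  set (z := fun s x => (c + (iD + k) * s) + iD * ((x - y) * (x - y)) - u s x).
  assert (Hz : forall s x, 0 <= s <= T -> y - D <= x <= y + D -> 0 <= z s x).
  { apply (maxp z (fun s x => (iD + k) - ut s x) (fun s x => iD * (2 * (x - y)) - ux s x)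
       (fun s x => iD * 2 - uxx s x) T (y - D) (y + D)); auto; try lra.
    - unfold z. apply (cont2_PQ (fun s => c + (iD + k) * s) (fun x => iD * ((x - y) * (x - y))) u); auto.
      + intro s. eapply deriv_cont.
        apply (deriv_ext (fun s => c + (iD + k) * s - 0)); [intros; ring|].
        apply (dl_lin (fun _ => 0) s 0 c (iD + k)). apply derivable_pt_lim_const.
      + intro x. eapply deriv_cont.
        apply (deriv_ext (fun x => 0 + iD * ((x - y) * (x - y)) - 0)); [intros; ring|].
        apply (dl_quad (fun _ => 0) x 0 0 iD y). apply derivable_pt_lim_const.
    - intros s x. unfold z.
      apply (deriv_ext (fun s => c + (iD + k) * s - (u s x - iD * ((x - y) * (x - y))))); [intros; ring|].
      apply (dl_lin (fun s => u s x - iD * ((x - y) * (x - y)))) .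
      replace (ut s x) with (ut s x - 0) by ring.
      apply (derivable_pt_lim_minus (fun s => u s x) (fct_cte _)); auto. apply derivable_pt_lim_const.
    - intros s x. unfold z.
      apply (deriv_ext (fun w => 0 + iD * ((w - y) * (w - y)) - (u s w - (c + (iD + k) * s)))); [intros; ring|].
      apply (dl_quad (fun w => u s w - (c + (iD + k) * s))).
      replace (ux s x) with (ux s x - 0) by ring.
      apply (derivable_pt_lim_minus (fun w => u s w) (fct_cte _)); auto. apply derivable_pt_lim_const.
    - intros s x.
      apply (deriv_ext (fun w => - (iD * 2 * y) + iD * 2 * w - ux s w)); [intros; ring|].
      apply (dl_lin (fun w => ux s w) x _ (- (iD * 2 * y)) (iD * 2) (Huxx s x)).
    - intros s x Hs Hx. rewrite Hpde by lra. lra.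
    - intros x Hx. unfold z. pose proof (Hinit x Hx). assert (0 <= (x - y) * (x - y)) by (pose proof (Rle_0_sqr (x - y)); unfold Rsqr in *; lra).
      assert (0 <= iD * ((x - y) * (x - y))) by (apply Rmult_le_pos; lra). rewrite Rmult_0_r. lra.
    - intros s Hs. unfold z. pose proof (Hle1 s (y - D) Hs ltac:(lra)). pose proof (Hle1 s (y + D) Hs ltac:(lra)).
      replace ((y - D - y) * (y - D - y)) with (D * D) by ring.
      replace ((y + D - y) * (y + D - y)) with (D * D) by ring.
      unfold iD. rewrite Rinv_l by lra. assert (0 <= (iD + k) * s) by (apply Rmult_le_pos; lra).
      unfold iD in *. split; lra. }
  specialize (Hz t y Ht ltac:(lra)). unfold z in Hz.
  replace ((y - y) * (y - y)) with 0 in Hz by ring.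
  assert (k * t <= k * T) by nra.
  assert (Hkk : k * (2 * (T + 1)) = u t y - c - t / (D * D)) by (unfold k; field; lra).
  unfold iD in Hz. unfold Rdiv in *. nra.
Qed.

Lemma sq_nn a : 0 <= a * a.
Proof. pose proof (Rle_0_sqr a). unfold Rsqr in *. lra. Qed.

Lemma lnbound d y : 0 < d <= 1 -> 0 < y -> y <= / d ->
  ln y <= y - 1 - d / 2 * ((y - 1) * (y - 1)).
Proof.
  intros Hd Hy Hyd.
  set (phi := fun w => w - 1 - d / 2 * ((w - 1) * (w - 1)) - ln w).
  set (phi' := fun w => 1 - d * (w - 1) - / w).
  assert (Hder : forall w, 0 < w -> derivable_pt_lim phi w (phi' w)).
  { intros w Hw.
    pose proof (dl_quad (fun _ => 0) w 0 0 (d/2) 1 (derivable_pt_lim_const 0 w)) as Hq.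
    pose proof (derivable_pt_lim_minus _ _ w _ _ (derivable_pt_lim_id w) (derivable_pt_lim_const 1 w)) as H1.
    pose proof (derivable_pt_lim_minus _ _ w _ _ H1 Hq) as H2.
    pose proof (derivable_pt_lim_minus _ _ w _ _ H2 (derivable_pt_lim_ln w Hw)) as H3.
    unfold minus_fct, fct_cte, id in H3.
    apply (deriv_ext _ phi) in H3; [|intros; unfold phi; ring].
    replace (phi' w) with (1 - 0 - (d / 2 * (2 * (w - 1)) - 0) - / w) by (unfold phi'; field; lra).
    exact H3. }
  assert (Hphi1 : phi 1 = 0) by (unfold phi; rewrite ln_1; ring).
  assert (Hd1 : 1 <= / d) by (rewrite <- Rinv_1; apply Rinv_le_contravar; lra).
  assert (phi y >= 0); [|unfold phi in *; lra].
  destruct (Rtotal_order y 1) as [Hlt|[Heq|Hgt]].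
  - destruct (MVT_cor2 phi phi' y 1 Hlt) as [c [Hc1 Hc2]]. { intros; apply Hder; lra. }
    assert (phi' c < 0).
    { unfold phi'. assert (Hc : 0 < c) by lra.
      assert (c * / c = 1) by (field; lra). assert (0 < / c) by (apply Rinv_0_lt_compat; lra).
      assert (Hx : c * (1 - d * (c - 1) - / c) = (c - 1) * (1 - d * c)) by (field; lra).
      assert ((c - 1) * (1 - d * c) < 0) by (apply Rmult_neg_pos; nra).
      nra. }
    assert (phi' c * (1 - y) < 0) by (apply Rmult_neg_pos; lra). lra.
  - subst. lra.
  - destruct (MVT_cor2 phi phi' 1 y Hgt) as [c [Hc1 Hc2]]. { intros; apply Hder; lra. }
    assert (0 < phi' c).
    { unfold phi'. assert (Hc : 0 < c) by lra.
      assert (0 < / c) by (apply Rinv_0_lt_compat; lra).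
      assert (Hx : c * (1 - d * (c - 1) - / c) = (c - 1) * (1 - d * c)) by (field; lra).
      assert (d * c < 1).
      { assert (d * y <= 1). { apply Rmult_le_reg_l with (/ d). apply Rinv_0_lt_compat; lra.
          rewrite <- Rmult_assoc, Rinv_l, Rmult_1_l, Rmult_1_r by lra. lra. } nra. }
      assert (0 < (c - 1) * (1 - d * c)) by (apply Rmult_lt_0_compat; lra).
      nra. }
    assert (0 < phi' c * (y - 1)) by (apply Rmult_lt_0_compat; lra). lra.
Qed.

Lemma KLbound d m r : 0 < d <= 1 -> d <= m <= 1 - d -> 0 < r < 1 ->
  d / 2 * ((m - r) * (m - r)) <= m * ln (m / r) + (1 - m) * ln ((1 - m) / (1 - r)).
Proof.
  intros Hd Hm Hr.
  assert (Hinvd : forall a, d <= a -> 0 < a -> / a <= / d).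
  { intros a Ha Hap. apply Rinv_le_contravar; lra. }
  set (y1 := r / m). set (y2 := (1 - r) / (1 - m)).
  assert (Hy1 : 0 < y1) by (unfold y1; apply Rdiv_lt_0_compat; lra).
  assert (Hy2 : 0 < y2) by (unfold y2; apply Rdiv_lt_0_compat; lra).
  assert (Hy1d : y1 <= / d).
  { unfold y1. apply Rle_trans with (1 / m). unfold Rdiv. apply Rmult_le_compat_r. left; apply Rinv_0_lt_compat; lra. lra.
    unfold Rdiv; rewrite Rmult_1_l. apply Hinvd; lra. }
  assert (Hy2d : y2 <= / d).
  { unfold y2. apply Rle_trans with (1 / (1 - m)). unfold Rdiv. apply Rmult_le_compat_r. left; apply Rinv_0_lt_compat; lra. lra.
    unfold Rdiv; rewrite Rmult_1_l. apply Hinvd; lra. }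
  pose proof (lnbound d y1 Hd Hy1 Hy1d) as L1.
  pose proof (lnbound d y2 Hd Hy2 Hy2d) as L2.
  assert (E1 : ln (m / r) = - ln y1).
  { assert (ln (m / r) + ln y1 = 0); [|lra]. unfold y1. rewrite <- ln_mult.
    replace (m / r * (r / m)) with 1 by (field; lra). apply ln_1.
    apply Rdiv_lt_0_compat; lra. apply Rdiv_lt_0_compat; lra. }
  assert (E2 : ln ((1 - m) / (1 - r)) = - ln y2).
  { assert (ln ((1 - m) / (1 - r)) + ln y2 = 0); [|lra]. unfold y2. rewrite <- ln_mult.
    replace ((1 - m) / (1 - r) * ((1 - r) / (1 - m))) with 1 by (field; lra). apply ln_1.
    apply Rdiv_lt_0_compat; lra. apply Rdiv_lt_0_compat; lra. }
  rewrite E1, E2.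
  assert (A1 : m * (y1 - 1) = r - m) by (unfold y1; field; lra).
  assert (A2 : (1 - m) * (y2 - 1) = m - r) by (unfold y2; field; lra).
  assert (B1 : m * ((y1 - 1) * (y1 - 1)) = (m - r) * (m - r) / m) by (unfold y1; field; lra).
  assert (B2 : (1 - m) * ((y2 - 1) * (y2 - 1)) = (m - r) * (m - r) / (1 - m)) by (unfold y2; field; lra).
  assert (C1 : (m - r) * (m - r) <= (m - r) * (m - r) / m).
  { pose proof (sq_nn (m - r)).
    apply Rmult_le_reg_l with m. lra. replace (m * ((m - r) * (m - r) / m)) with ((m - r) * (m - r)) by (field; lra). nra. }
  assert (C2 : 0 <= (m - r) * (m - r) / (1 - m)).
  { apply Rmult_le_pos. apply sq_nn. left; apply Rinv_0_lt_compat; lra. }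
  assert (m * - ln y1 >= m * (- (y1 - 1) + d / 2 * ((y1 - 1) * (y1 - 1)))) by (apply Rle_ge, Rmult_le_compat_l; lra).
  assert ((1 - m) * - ln y2 >= (1 - m) * (- (y2 - 1) + d / 2 * ((y2 - 1) * (y2 - 1)))) by (apply Rle_ge, Rmult_le_compat_l; lra).
  assert (m * (- (y1 - 1) + d / 2 * ((y1 - 1) * (y1 - 1))) = - (r - m) + d / 2 * ((m - r) * (m - r) / m)) by (unfold y1; field; lra).
  assert ((1 - m) * (- (y2 - 1) + d / 2 * ((y2 - 1) * (y2 - 1))) = - (m - r) + d / 2 * ((m - r) * (m - r) / (1 - m))) by (unfold y2; field; lra).
  assert (d / 2 * ((m - r) * (m - r)) <= d / 2 * ((m - r) * (m - r) / m)) by (apply Rmult_le_compat_l; lra).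
  assert (0 <= d / 2 * ((m - r) * (m - r) / (1 - m))) by (apply Rmult_le_pos; lra).
  lra.
Qed.

Fixpoint ssum (f : nat -> R) (n : nat) : R :=
  match n with O => 0 | S n => ssum f n + f n end.

Lemma ssum_nonneg f n : (forall k, 0 <= f k) -> 0 <= ssum f n.
Proof. intros H; induction n; simpl; [lra|]. pose proof (H n); lra. Qed.

Lemma ssum_term f n k : (forall k, 0 <= f k) -> (k < n)%nat -> f k <= ssum f n.
Proof.
  intros H Hk; induction n; [lia|]. simpl. destruct (Nat.eq_dec k n) as [->|Hne].
  - pose proof (ssum_nonneg f n H); lra.
  - assert (f k <= ssum f n) by (apply IHn; lia). pose proof (H n); lra.
Qed.

Lemma ssum_ext f g n : (forall k, (k < n)%nat -> f k = g k) -> ssum f n = ssum g n.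
Proof. intros H; induction n; simpl; auto. rewrite IHn by (intros; apply H; lia). rewrite H by lia. auto. Qed.

Lemma ssum_replace f n k0 c : (k0 < n)%nat ->
  ssum (fun k => if Nat.eqb k k0 then c else f k) n = ssum f n - f k0 + c.
Proof.
  intros H; induction n; [lia|]. simpl. destruct (Nat.eq_dec k0 n) as [->|Hne].
  - rewrite Nat.eqb_refl. rewrite (ssum_ext _ f n). ring.
    intros k Hk. destruct (Nat.eqb_spec k n); [lia|auto].
  - rewrite IHn by lia. destruct (Nat.eqb_spec n k0); [lia|]. ring.
Qed.

Lemma ssum_sumf f n : ssum f (S n) = sum_f_R0 f n.
Proof. induction n; simpl in *; auto. lra. rewrite <- IHn. auto. Qed.

Lemma ssum_add f N m : ssum f (N + m) = ssum f N + ssum (fun k => f (N + k)%nat) m.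
Proof. induction m; simpl. rewrite Nat.add_0_r; ring. rewrite Nat.add_succ_r. simpl. rewrite IHm. ring. Qed.

Lemma cover_len K : forall (al be : nat -> R) a b, (forall k, al k <= be k) -> a <= b ->
  (forall z, a <= z <= b -> exists k, (k < K)%nat /\ al k < z < be k) ->
  b - a <= ssum (fun k => be k - al k) K.
Proof.
  induction K as [|K IH]; intros al be a b Hle Hab Hcov.
  - destruct (Hcov a) as [k [Hk _]]; [lra|lia].
  - destruct (Hcov b) as [k0 [Hk0 Hb0]]; [lra|].
    assert (Hnn : forall k, 0 <= be k - al k) by (intro k; pose proof (Hle k); lra).
    destruct (Rlt_dec (al k0) a) as [Hlt|Hge].
    + pose proof (ssum_term (fun k => be k - al k) (S K) k0 Hnn Hk0). simpl in *. lra.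
    + set (al' := fun k => if Nat.eqb k k0 then al K else al k).
      set (be' := fun k => if Nat.eqb k k0 then be K else be k).
      assert (H1 : al k0 - a <= ssum (fun k => be' k - al' k) K).
      { apply IH.
        - intro k. unfold al', be'. destruct (Nat.eqb k k0); auto.
        - lra.
        - intros z Hz. destruct (Hcov z) as [k [Hk Hzk]]; [lra|].
          destruct (Nat.eq_dec k k0) as [->|Hne]; [lra|].
          destruct (Nat.eq_dec k K) as [->|HneK].
          + exists k0. split; [lia|]. unfold al', be'. rewrite Nat.eqb_refl. auto.
          + exists k. split; [lia|]. unfold al', be'. destruct (Nat.eqb_spec k k0); [lia|auto]. }
      assert (E : ssum (fun k => be' k - al' k) K = ssum (fun k => if Nat.eqb k k0 then be K - al K else be k - al k) K).
      { apply ssum_ext. intros k _. unfold al', be'. destruct (Nat.eqb k k0); auto. }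
      rewrite E in H1. simpl.
      destruct (Nat.eq_dec k0 K) as [->|HneK].
      * rewrite (ssum_ext _ (fun k => be k - al k) K) in H1. lra.
        intros k Hk. destruct (Nat.eqb_spec k K); [lia|auto].
      * rewrite ssum_replace in H1 by lia. lra.
Qed.

Lemma finite_cover (al be : nat -> R) a b : a <= b ->
  (forall z, a <= z <= b -> exists k, al k < z < be k) ->
  exists K, forall z, a <= z <= b -> exists k, (k < K)%nat /\ al k < z < be k.
Proof.
  intros Hab Hcov.
  apply (real_ind (fun u v => exists K, forall z, u <= z <= v -> exists k, (k < K)%nat /\ al k < z < be k)); auto.
  - intros u v w Huvw [K1 H1] [K2 H2]. exists (Nat.max K1 K2). intros z Hz.
    destruct (Rle_dec z v).
    + destruct (H1 z) as [k [Hk Hz']]; [lra|]. exists k; split; [lia|auto].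
    + destruct (H2 z) as [k [Hk Hz']]; [lra|]. exists k; split; [lia|auto].
  - intros y Hy. destruct (Hcov y Hy) as [k0 Hk0].
    exists (Rmin (y - al k0) (be k0 - y)). split; [apply Rmin_pos; lra|].
    intros u v Hu Hv. exists (S k0). intros z Hz. exists k0. split; [lia|].
    pose proof (Rmin_l (y - al k0) (be k0 - y)). pose proof (Rmin_r (y - al k0) (be k0 - y)). lra.
Qed.

Lemma outer_refl A c : outer_le A c -> outer_le (fun x => A (- x)) c.
Proof.
  intros H eps Heps. destruct (H eps Heps) as [a [b [H1 [H2 H3]]]].
  exists (fun n => - b n), (fun n => - a n). split; [|split].
  - intro n; pose proof (H1 n); lra.
  - intros x Hx. destruct (H2 _ Hx) as [n Hn]. exists n. lra.
  - intro N. rewrite (sum_eq _ (fun n => b n - a n)); auto. intros; ring.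
Qed.

Lemma telescope (p : nat -> R) r N :
  ssum (fun k => p (S k) - r - (p k + r)) N = p N - p O - 2 * r * INR N.
Proof. induction N; simpl ssum. simpl; ring. rewrite IHN, S_INR. ring. Qed.

Lemma far_intervals A c r : outer_le A c -> 0 < r ->
  (forall R0, exists p, R0 <= p /\ forall z, p - r <= z <= p + r -> A z) -> False.
Proof.
  intros Hout Hr Hfar.
  destruct (Hout 1 ltac:(lra)) as [a [b [Hab [Hcov Hsum]]]].
  destruct (INR_unbounded ((c + 1) / (2 * r))) as [N HN].
  assert (Hbuild : forall N, exists p : nat -> R,
    (forall i, (i < N)%nat -> p i + 2 * r + 1 <= p (S i)) /\
    (forall i, (i <= N)%nat -> forall z, p i - r <= z <= p i + r -> A z)).
  { induction N0 as [|N0 IH].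
    - destruct (Hfar 0) as [p0 [_ Hp0]]. exists (fun _ => p0). split; [intros; lia|]. intros; auto.
    - destruct IH as [p [Hp1 Hp2]]. destruct (Hfar (p N0 + 2 * r + 1)) as [q [Hq1 Hq2]].
      exists (fun i => if Nat.leb i N0 then p i else q). split.
      + intros i Hi. destruct (Nat.leb_spec i N0); [|lia]. destruct (Nat.leb_spec (S i) N0).
        * apply Hp1; lia.
        * assert (i = N0) by lia. subst. auto.
      + intros i Hi z Hz. destruct (Nat.leb_spec i N0).
        * apply (Hp2 i); auto.
        * apply Hq2; auto. }
  destruct (Hbuild N) as [p [Hp1 Hp2]].
  assert (Hpieces : forall n, (n <= N)%nat -> forall z, p O - r <= z <= p n + r ->
     (exists i, (i <= n)%nat /\ p i - r <= z <= p i + r) \/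
     (exists i, (i < n)%nat /\ p i + r < z < p (S i) - r)).
  { induction n as [|n IHn]; intros Hn z Hz.
    - left. exists O. split; auto.
    - destruct (Rle_dec z (p n + r)).
      + destruct (IHn ltac:(lia) z ltac:(lra)) as [[i [Hi Hi2]]|[i [Hi Hi2]]].
        * left. exists i. split; [lia|auto].
        * right. exists i. split; [lia|auto].
      + destruct (Rlt_dec z (p (S n) - r)).
        * right. exists n. split; [lia|]. lra.
        * left. exists (S n). split; [lia|]. lra. }
  set (al := fun k => if Nat.ltb k N then p k + r else a (k - N)%nat).
  set (be := fun k => if Nat.ltb k N then p (S k) - r else b (k - N)%nat).
  assert (Hmono : forall i, (i <= N)%nat -> p O <= p i).
  { induction i; intros Hi; [lra|]. pose proof (Hp1 i ltac:(lia)). pose proof (IHi ltac:(lia)). lra. }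
  assert (Hbig : forall z, p O - r <= z <= p N + r -> exists k, al k < z < be k).
  { intros z Hz. destruct (Hpieces N (le_n _) z Hz) as [[i [Hi Hi2]]|[i [Hi Hi2]]].
    - destruct (Hcov z (Hp2 i Hi z Hi2)) as [n Hn]. exists (N + n)%nat.
      unfold al, be. destruct (Nat.ltb_spec (N + n) N); [lia|].
      replace (N + n - N)%nat with n by lia. auto.
    - exists i. unfold al, be. destruct (Nat.ltb_spec i N); [|lia]. auto. }
  pose proof (Hmono N (le_n _)).
  destruct (finite_cover al be (p O - r) (p N + r) ltac:(lra) Hbig) as [K HK].
  assert (Hle : forall k, al k <= be k).
  { intro k. unfold al, be. destruct (Nat.ltb_spec k N).
    - pose proof (Hp1 k H0). lra.
    - apply Hab. }
  pose proof (cover_len (N + K) al be (p O - r) (p N + r) Hle ltac:(lra)) as CL.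
  assert (Hcv : forall z, p O - r <= z <= p N + r -> exists k, (k < N + K)%nat /\ al k < z < be k).
  { intros z Hz. destruct (HK z Hz) as [k [Hk Hk2]]. exists k. split; [lia|auto]. }
  specialize (CL Hcv). rewrite ssum_add in CL.
  rewrite (ssum_ext _ (fun k => p (S k) - r - (p k + r)) N) in CL.
  2:{ intros k Hk. unfold al, be. destruct (Nat.ltb_spec k N); [auto|lia]. }
  rewrite telescope in CL.
  rewrite (ssum_ext _ (fun k => b k - a k) K) in CL.
  2:{ intros k Hk. unfold al, be. destruct (Nat.ltb_spec (N + k) N); [lia|].
      replace (N + k - N)%nat with k by lia. auto. }
  assert (Hs : ssum (fun k => b k - a k) K <= c + 1).
  { destruct K. simpl. pose proof (Hsum O). simpl in *. pose proof (Hab O). lra.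
    rewrite ssum_sumf. apply Hsum. }
  assert (Hrr : (c + 1) / (2 * r) * (2 * r) = c + 1) by (field; lra).
  assert (INR N * (2 * r) > (c + 1) / (2 * r) * (2 * r)) by (apply Rmult_gt_compat_r; lra).
  lra.
Qed.

Lemma conv_side (m F : R -> R) rho d X K0 :
  0 < d <= 1 -> (forall x, d <= m x <= 1 - d) -> 0 < rho < 1 -> 0 < K0 ->
  (forall s, 0 < s -> exists c, outer_le (fun x => s < F x) c) ->
  (forall x z, X <= x -> X <= z -> Rabs (m z - m x) <= K0 * Rabs (z - x)) ->
  (forall x, X <= x -> F x = m x * ln (m x / rho) + (1 - m x) * ln ((1 - m x) / (1 - rho))) ->
  forall eps, 0 < eps -> exists R0, forall x, R0 <= x -> Rabs (m x - rho) <= eps.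
Proof.
  intros Hd Hm Hrho HK Hout Hlip HF eps Heps.
  apply NNPP. intro Hn.
  set (r := eps / (2 * K0)).
  assert (Hr : 0 < r) by (unfold r; apply Rdiv_lt_0_compat; lra).
  set (s := d / 2 * ((eps / 2) * (eps / 2)) / 2).
  assert (Hs : 0 < s) by (unfold s; assert (0 < eps/2 * (eps/2)) by (apply Rmult_lt_0_compat; lra);
     apply Rdiv_lt_0_compat; [apply Rmult_lt_0_compat|]; lra).
  destruct (Hout s Hs) as [c Hc].
  apply (far_intervals _ c r Hc Hr).
  intros R0. apply NNPP. intro Hn2. apply Hn. exists (Rmax R0 (X + r)). intros x Hx.
  apply Rnot_lt_le. intro Hbad. apply Hn2. exists x.
  pose proof (Rmax_l R0 (X + r)). pose proof (Rmax_r R0 (X + r)).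
  split; [lra|]. intros z Hz.
  pose proof (Hlip x z ltac:(lra) ltac:(lra)) as Hl.
  assert (Hzx : K0 * Rabs (z - x) <= eps / 2).
  { apply Rle_trans with (K0 * r). apply Rmult_le_compat_l; [lra|]. apply Rabs_le; lra.
    unfold r. right. field. lra. }
  assert (Hfar : eps / 2 <= Rabs (m z - rho)).
  { pose proof (Rabs_triang_inv (m x - rho) (m x - m z)).
    replace (m x - rho - (m x - m z)) with (m z - rho) in H1 by ring.
    rewrite <- Rabs_Ropp in Hl. replace (- (m z - m x)) with (m x - m z) in Hl by ring. lra. }
  rewrite HF by lra.
  eapply Rlt_le_trans; [|apply (KLbound d); auto].
  unfold s.
  assert ((eps / 2) * (eps / 2) <= (m z - rho) * (m z - rho)).
  { assert (E : (m z - rho) * (m z - rho) = Rabs (m z - rho) * Rabs (m z - rho))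
      by (rewrite <- Rabs_mult; rewrite Rabs_pos_eq; [auto|apply sq_nn]). rewrite E.
    pose proof (Rabs_pos (m z - rho)).
    apply Rmult_le_compat; lra. }
  assert (0 < d / 2 * (eps / 2 * (eps / 2))) by (apply Rmult_lt_0_compat; [lra|apply Rmult_lt_0_compat; lra]).
  assert (d / 2 * (eps / 2 * (eps / 2)) <= d / 2 * ((m z - rho) * (m z - rho))) by (apply Rmult_le_compat_l; lra).
  lra.
Qed.

Definition btw a b y := (a <= y <= b) \/ (b <= y <= a).

Lemma mvt2 (g g' : R -> R) a b K :
  (forall y, btw a b y -> derivable_pt_lim g y (g' y)) ->
  (forall y, btw a b y -> Rabs (g' y) <= K) -> Rabs (g b - g a) <= K * Rabs (b - a).
Proof.
  intros Hd Hb. destruct (Rle_dec a b).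
  - rewrite (Rabs_pos_eq (b - a)) by lra. apply (mvt_bound g g'); auto; intros; [apply Hd|apply Hb]; left; lra.
  - rewrite Rabs_minus_sym, (Rabs_minus_sym b a), (Rabs_pos_eq (a - b)) by lra.
    apply (mvt_bound g g'); [lra| |]; intros; [apply Hd|apply Hb]; right; lra.
Qed.

Lemma dl_poly (g : R -> R) g' x y al be ga :
  derivable_pt_lim g y g' ->
  derivable_pt_lim (fun w => g w - (al + be * (w - x) + ga * ((w - x) * (w - x)))) y
     (g' - (be + ga * (2 * (y - x)))).
Proof.
  intros H.
  pose proof (derivable_pt_lim_minus id (fct_cte x) y _ _ (derivable_pt_lim_id y) (derivable_pt_lim_const x y)) as Hm.
  pose proof (derivable_pt_lim_mult _ _ y _ _ Hm Hm) as Hmm.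
  pose proof (derivable_pt_lim_scal _ ga y _ Hmm) as Hs.
  pose proof (derivable_pt_lim_scal _ be y _ Hm) as Hs1.
  pose proof (derivable_pt_lim_plus _ _ y _ _ (derivable_pt_lim_const al y) Hs1) as Hp.
  pose proof (derivable_pt_lim_plus _ _ y _ _ Hp Hs) as Hp2.
  pose proof (derivable_pt_lim_minus _ _ y _ _ H Hp2) as H2.
  unfold minus_fct, plus_fct, mult_fct, mult_real_fct, fct_cte, id in H2.
  replace (g' - (be + ga * (2 * (y - x)))) with
    (g' - (0 + be * (1 - 0) + ga * ((1 - 0) * (y - x) + (y - x) * (1 - 0)))) by ring.
  exact H2.
Qed.

Lemma btw_sub x z y w : btw x z y -> btw x y w -> btw x z w.
Proof. unfold btw; intros; lra. Qed.

Lemma btw_dist x z y : btw x z y -> Rabs (y - x) <= Rabs (z - x).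
Proof. unfold btw; intros [H|H]; unfold Rabs; repeat destruct Rcase_abs; lra. Qed.

Lemma taylor3 (f0 f1 f2 f3 : R -> R) x h C :
  (forall y, derivable_pt_lim f0 y (f1 y)) -> (forall y, derivable_pt_lim f1 y (f2 y)) ->
  (forall y, derivable_pt_lim f2 y (f3 y)) ->
  (forall y, btw x (x + h) y -> Rabs (f3 y) <= C) ->
  Rabs (f0 (x + h) - f0 x - f1 x * h - f2 x * h * h / 2) <= C * Rabs h * (Rabs h * Rabs h).
Proof.
  intros D0 D1 D2 Hb.
  assert (Hxx : btw x (x + h) x) by (unfold btw; destruct (Rle_dec 0 h); [left|right]; lra).
  assert (HC : 0 <= C) by (specialize (Hb x Hxx); pose proof (Rabs_pos (f3 x)); lra).
  assert (E1 : forall y, btw x (x + h) y -> Rabs (f2 y - f2 x) <= C * Rabs h).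
  { intros y Hy. eapply Rle_trans. apply (mvt2 f2 f3 x y C); auto.
    intros w Hw. apply Hb. eapply btw_sub; eauto.
    apply Rmult_le_compat_l; auto. replace (Rabs h) with (Rabs (x + h - x)) by (f_equal; ring). apply btw_dist; auto. }
  assert (E2 : forall y, btw x (x + h) y ->
     Rabs ((fun w => f1 w - (f1 x + f2 x * (w - x) + 0 * ((w - x) * (w - x)))) y
         - (fun w => f1 w - (f1 x + f2 x * (w - x) + 0 * ((w - x) * (w - x)))) x) <= C * Rabs h * Rabs h).
  { intros y Hy. eapply Rle_trans.
    apply (mvt2 (fun w => f1 w - (f1 x + f2 x * (w - x) + 0 * ((w - x) * (w - x)))) (fun w => f2 w - (f2 x + 0 * (2 * (w - x)))) x y (C * Rabs h)).
    - intros w _. apply dl_poly. auto.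
    - intros w Hw. replace (f2 w - (f2 x + 0 * (2 * (w - x)))) with (f2 w - f2 x) by ring.
      apply E1. eapply btw_sub; eauto.
    - apply Rmult_le_compat_l. apply Rmult_le_pos; auto; apply Rabs_pos.
      replace (Rabs h) with (Rabs (x + h - x)) by (f_equal; ring). apply btw_dist; auto. }
  pose proof (mvt2 (fun w => f0 w - (f0 x + f1 x * (w - x) + f2 x / 2 * ((w - x) * (w - x))))
     (fun w => f1 w - (f1 x + f2 x / 2 * (2 * (w - x)))) x (x + h) (C * Rabs h * Rabs h)) as M.
  simpl in M.
  replace (f0 (x + h) - f0 x - f1 x * h - f2 x * h * h / 2) with
    (f0 (x + h) - (f0 x + f1 x * (x + h - x) + f2 x / 2 * ((x + h - x) * (x + h - x))) -
      (f0 x - (f0 x + f1 x * (x - x) + f2 x / 2 * ((x - x) * (x - x))))) by field.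
  replace (C * Rabs h * (Rabs h * Rabs h)) with (C * Rabs h * Rabs h * Rabs (x + h - x))
    by (replace (x + h - x) with h by ring; ring).
  apply M.
  - intros y _. apply dl_poly. auto.
  - intros y Hy. specialize (E2 y Hy). simpl in E2.
    replace (f1 y - (f1 x + f2 x / 2 * (2 * (y - x)))) with
      (f1 y - (f1 x + f2 x * (y - x) + 0 * ((y - x) * (y - x))) - (f1 x - (f1 x + f2 x * (x - x) + 0 * ((x - x) * (x - x))))) by field.
    auto.
Qed.

Lemma abs4 a b c d : Rabs (4 * a - b - 4 * c + d) <= 4 * Rabs a + Rabs b + 4 * Rabs c + Rabs d.
Proof. unfold Rabs; repeat destruct Rcase_abs; lra. Qed.

Lemma landau (f0 f1 f2 f3 : R -> R) x h C :
  (forall y, derivable_pt_lim f0 y (f1 y)) -> (forall y, derivable_pt_lim f1 y (f2 y)) ->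
  (forall y, derivable_pt_lim f2 y (f3 y)) -> Rabs h = 1 ->
  (forall y, btw x (x + 2 * h) y -> Rabs (f3 y) <= C) ->
  (forall a b, Rabs (f0 a - f0 b) <= 1) ->
  Rabs (f1 x) <= (5 + 12 * C) / 2.
Proof.
  intros D0 D1 D2 Hh Hb Hf.
  pose proof (taylor3 f0 f1 f2 f3 x h C D0 D1 D2) as T1.
  pose proof (taylor3 f0 f1 f2 f3 x (2 * h) C D0 D1 D2 Hb) as T2.
  assert (T1' : Rabs (f0 (x + h) - f0 x - f1 x * h - f2 x * h * h / 2) <= C).
  { rewrite Hh in T1. replace C with (C * 1 * (1 * 1)) by ring. apply T1.
    intros y Hy. apply Hb. unfold btw in *. destruct (Rle_dec 0 h); lra. }
  rewrite Rabs_mult, Hh, (Rabs_pos_eq 2) in T2 by lra.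
  assert (Hhh : h * h = 1).
  { rewrite <- (Rabs_pos_eq (h * h)) by apply sq_nn. rewrite Rabs_mult, Hh. ring. }
  assert (E : f1 x = / (2 * h) * (4 * (f0 (x + h) - f0 x) - (f0 (x + 2 * h) - f0 x)
     - 4 * (f0 (x + h) - f0 x - f1 x * h - f2 x * h * h / 2)
     + (f0 (x + 2 * h) - f0 x - f1 x * (2 * h) - f2 x * (2 * h) * (2 * h) / 2))).
  { assert (h <> 0) by (intro; subst; rewrite Rabs_R0 in Hh; lra). field. auto. }
  rewrite E, Rabs_mult, Rabs_inv, Rabs_mult, Hh, (Rabs_pos_eq 2) by lra.
  pose proof (Hf (x + h) x). pose proof (Hf (x + 2 * h) x).
  pose proof (abs4 (f0 (x + h) - f0 x) (f0 (x + 2 * h) - f0 x) (f0 (x + h) - f0 x - f1 x * h - f2 x * h * h / 2)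
    (f0 (x + 2 * h) - f0 x - f1 x * (2 * h) - f2 x * (2 * h) * (2 * h) / 2)).
  replace (/ (2 * 1)) with (/2) by field. lra.
Qed.

Lemma cont2_om (f : R -> R -> R) : continuous2 f -> continuous2 (fun t x => 1 - f t x).
Proof.
  intros H t x e He. destruct (H t x e He) as [d [Hd H2]]. exists d. split; auto.
  intros s y Hs Hy. specialize (H2 s y Hs Hy). rewrite <- Rabs_Ropp. replace (- (1 - f s y - (1 - f t x))) with (f s y - f t x) by ring. auto.
Qed.

Lemma dl_om (f : R -> R) x l : derivable_pt_lim f x l -> derivable_pt_lim (fun s => 1 - f s) x (- l).
Proof.
  intros H. apply (deriv_ext (fun s => 1 + 0 * s - f s)); [intros; ring|].
  replace (- l) with (0 - l) by ring. apply dl_lin; auto.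
Qed.

Lemma dl_neg (f : R -> R) x l : derivable_pt_lim f x l -> derivable_pt_lim (fun s => - f s) x (- l).
Proof.
  intros H. apply (deriv_ext (fun s => 0 + 0 * s - f s)); [intros; ring|].
  replace (- l) with (0 - l) by ring. apply dl_lin; auto.
Qed.

Lemma abs_el a b : Rabs a <= b -> - b <= a <= b.
Proof. unfold Rabs; destruct Rcase_abs; lra. Qed.

Lemma final_bound eps t T : 0 < eps -> 0 <= t <= T -> 0 < T ->
  t / ((2 * T / eps + 1) * (2 * T / eps + 1)) <= eps / 2.
Proof.
  intros He Ht HT. set (D := 2 * T / eps + 1).
  assert (H0 : 0 <= 2 * T / eps) by (apply Rlt_le, Rdiv_lt_0_compat; lra).
  assert (HD : 1 <= D) by (unfold D; lra).
  assert (HDD : D <= D * D) by nra.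
  assert (HT2 : eps / 2 * (2 * T / eps) = T) by (field; lra).
  apply Rmult_le_reg_r with (D * D). nra.
  unfold Rdiv at 1. rewrite Rmult_assoc, Rinv_l, Rmult_1_r by nra.
  assert (eps / 2 * (2 * T / eps) <= eps / 2 * D) by (apply Rmult_le_compat_l; unfold D; lra).
  assert (eps / 2 * D <= eps / 2 * (D * D)) by (apply Rmult_le_compat_l; lra).
  lra.
Qed.

Theorem lemma2p2 (T rho_lo rho_hi : R) (gamma : R -> R)
  (mu : R -> R -> R) (D : nat -> nat -> R -> R -> R) (Hx : R -> R -> R) :
  0 < T ->
  0 < rho_lo < 1 -> 0 < rho_hi < 1 ->
  in_M1_rho rho_lo rho_hi gamma ->
  entropy_finite (mu 0) gamma ->
  I0_finite T mu ->
  (* (i) *)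
  (exists delta, 0 < delta < 1 /\
     forall t x, 0 <= t <= T -> delta <= mu t x <= 1 - delta) ->
  (* (ii) smoothness, D k l = d_x^k d_t^l mu *)
  smooth_family mu D ->
  (* (iii) *)
  smooth2 Hx -> compact_support_strip T Hx ->
  (forall t x, 0 <= t <= T ->
     derivable_pt_lim (fun y => Hx t y * (mu t y * (1 - mu t y))) x
       (/ 2 * D 2%nat 0%nat t x - D 0%nat 1%nat t x)) ->
  (* (iv) *)
  (forall k l, (1 <= k)%nat -> (1 <= l)%nat ->
     exists B, forall t x, 0 <= t <= T -> Rabs (D k l t x) <= B) ->
  forall eps, 0 < eps -> exists R0, forall y, R0 < Rabs y ->
    forall t, 0 <= t <= T -> Rabs (mu t y - gamma y) <= eps.
Proof.
  intros HT Hlo Hhi Hgam Hent _ [dl [Hdl Hmu]] [HD00 [HDx [HDt HDc]]] _ [L HL] Hpde Hiv eps Heps.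
  assert (Emu : mu = D 0%nat 0%nat).
  { apply functional_extensionality; intro t; apply functional_extensionality; intro x. auto. }
  subst mu. clear HD00.
  destruct Hgam as [_ [xlo [xhi [Hxx [Hglo Hghi]]]]].
  destruct Hent as [_ [Hlev _]].
  assert (Hout : forall s, 0 < s -> exists c, outer_le (fun x => s < entropy_density (D 0%nat 0%nat 0) gamma x) c).
  { intros s Hs. destruct (Hlev s Hs) as [v [Hv _]]. exists v. auto. }
  assert (Hheat : forall t x, 0 <= t <= T -> L < Rabs x -> D 0%nat 1%nat t x = / 2 * D 2%nat 0%nat t x).
  { intros t x Ht Hxl.
    assert (Hz : derivable_pt_lim (fun y => Hx t y * (D 0%nat 0%nat t y * (1 - D 0%nat 0%nat t y))) x 0).
    { apply (deriv_local (fct_cte 0) _ x 0 (Rabs x - L)); [lra| |apply derivable_pt_lim_const].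
      intros z Hzx. unfold fct_cte. rewrite HL; [ring|auto|].
      pose proof (Rabs_triang_inv x (x - z)). replace (x - (x - z)) with z in H by ring.
      rewrite Rabs_minus_sym in Hzx. lra. }
    pose proof (uniqueness_limite _ _ _ _ (Hpde t x Ht) Hz). lra. }
  destruct (Hiv 1%nat 1%nat ltac:(lia) ltac:(lia)) as [B11 HB11].
  assert (HB0 : 0 <= B11) by (pose proof (HB11 0 0 ltac:(lra)); pose proof (Rabs_pos (D 1%nat 1%nat 0 0)); lra).
  assert (H3 : forall x, L < Rabs x -> Rabs (D 3%nat 0%nat 0 x) <= 2 * B11).
  { intros x Hxl.
    assert (Hd : derivable_pt_lim (fun y => / 2 * D 2%nat 0%nat 0 y) x (/ 2 * D 3%nat 0%nat 0 x)).
    { pose proof (derivable_pt_lim_scal _ (/2) x _ (HDx 2%nat 0%nat 0 x)) as H. exact H. }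
    assert (Hd2 : derivable_pt_lim (fun y => / 2 * D 2%nat 0%nat 0 y) x (D 1%nat 1%nat 0 x)).
    { apply (deriv_local (fun y => D 0%nat 1%nat 0 y) _ x _ (Rabs x - L)); [lra| |apply HDx].
      intros z Hzx. apply Hheat; [lra|].
      pose proof (Rabs_triang_inv x (x - z)). replace (x - (x - z)) with z in H by ring.
      rewrite Rabs_minus_sym in Hzx. lra. }
    pose proof (uniqueness_limite _ _ _ _ Hd Hd2) as E.
    pose proof (HB11 0 x ltac:(lra)). rewrite <- E in H.
    rewrite Rabs_mult, Rabs_pos_eq in H by lra. lra. }
  set (K0 := (5 + 12 * (2 * B11)) / 2).
  assert (HK0 : 0 < K0) by (unfold K0; lra).
  assert (Hbd01 : forall a b, Rabs (D 0%nat 0%nat 0 a - D 0%nat 0%nat 0 b) <= 1).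
  { intros a b. pose proof (Hmu 0 a ltac:(lra)). pose proof (Hmu 0 b ltac:(lra)). apply Rabs_le; lra. }
  assert (HD1 : forall x, L < Rabs x -> Rabs (D 1%nat 0%nat 0 x) <= K0).
  { intros x Hxl. unfold K0.
    destruct (Rle_dec 0 x).
    - apply (landau (fun y => D 0%nat 0%nat 0 y) (fun y => D 1%nat 0%nat 0 y) (fun y => D 2%nat 0%nat 0 y)
        (fun y => D 3%nat 0%nat 0 y) x 1); auto.
      + rewrite Rabs_R1; auto.
      + intros y Hy. apply H3. rewrite Rabs_pos_eq in Hxl by lra. unfold btw in Hy.
        destruct Hy; rewrite Rabs_pos_eq; lra.
    - apply (landau (fun y => D 0%nat 0%nat 0 y) (fun y => D 1%nat 0%nat 0 y) (fun y => D 2%nat 0%nat 0 y)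
        (fun y => D 3%nat 0%nat 0 y) x (-1)); auto.
      + unfold Rabs; destruct Rcase_abs; lra.
      + intros y Hy. apply H3. rewrite Rabs_left in Hxl by lra. unfold btw in Hy.
        destruct Hy; rewrite Rabs_left; lra. }
  clearbody K0.
  assert (Hlip : forall a b, (forall y, btw a b y -> L < Rabs y) ->
     Rabs (D 0%nat 0%nat 0 b - D 0%nat 0%nat 0 a) <= K0 * Rabs (b - a)).
  { intros a b Hab. apply (mvt2 _ (fun y => D 1%nat 0%nat 0 y)); auto. }
  assert (Hdl' : 0 < dl <= 1) by lra.
  assert (Hm0 : forall x, dl <= D 0%nat 0%nat 0 x <= 1 - dl) by (intro; apply Hmu; lra).
  destruct (conv_side (D 0%nat 0%nat 0) (entropy_density (D 0%nat 0%nat 0) gamma) rho_hi dl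
      (Rmax xhi (Rabs L + 1)) K0 Hdl' Hm0 Hhi HK0 Hout) with (eps := eps / 2) as [Rp HRp]; try lra.
  { intros x z Hx1 Hz1. pose proof (Rmax_r xhi (Rabs L + 1)). pose proof (Rle_abs L).
    apply Hlip. intros y Hy. unfold btw in Hy. pose proof (Rabs_pos L). destruct Hy; rewrite Rabs_pos_eq; lra. }
  { intros x Hx1. pose proof (Rmax_l xhi (Rabs L + 1)). unfold entropy_density. rewrite Hghi by lra. auto. }
  destruct (conv_side (fun x => D 0%nat 0%nat 0 (- x)) (fun x => entropy_density (D 0%nat 0%nat 0) gamma (- x)) rho_lo dl
      (Rmax (- xlo) (Rabs L + 1)) K0 Hdl') with (eps := eps / 2) as [Rm HRm]; auto; try lra.
  { intros s Hs. destruct (Hout s Hs) as [c Hc]. exists c. apply (outer_refl _ _ Hc). }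
  { intros x z Hx1 Hz1. pose proof (Rmax_r (- xlo) (Rabs L + 1)). pose proof (Rle_abs L).
    replace (Rabs (z - x)) with (Rabs (- z - - x)) by (rewrite <- Rabs_Ropp; f_equal; ring).
    pose proof (Rabs_pos L). apply Hlip. intros y Hy. unfold btw in Hy. destruct Hy; rewrite Rabs_left; lra. }
  { intros x Hx1. pose proof (Rmax_l (- xlo) (Rabs L + 1)). unfold entropy_density. rewrite Hglo by lra. auto. }
  set (D0 := 2 * T / eps + 1).
  assert (HD0 : 0 < D0) by (unfold D0; assert (0 < 2 * T / eps) by (apply Rdiv_lt_0_compat; lra); lra).
  set (M := Rmax (Rmax Rp Rm) (Rmax (Rmax xhi (- xlo)) (Rabs L))).
  exists (M + D0 + 1). intros y Hy t Ht.
  pose proof (Rmax_l (Rmax Rp Rm) (Rmax (Rmax xhi (- xlo)) (Rabs L))) as M1.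
  pose proof (Rmax_r (Rmax Rp Rm) (Rmax (Rmax xhi (- xlo)) (Rabs L))) as M2.
  pose proof (Rmax_l Rp Rm). pose proof (Rmax_r Rp Rm).
  pose proof (Rmax_l (Rmax xhi (- xlo)) (Rabs L)). pose proof (Rmax_r (Rmax xhi (- xlo)) (Rabs L)).
  pose proof (Rmax_l xhi (- xlo)). pose proof (Rmax_r xhi (- xlo)).
  fold M in M1, M2. pose proof (Rle_abs L). pose proof (Rabs_pos L).
  pose proof (final_bound eps t T Heps Ht HT) as FB. fold D0 in FB.
  assert (HT' : t / (D0 * D0) <= eps / 2) by exact FB.
  assert (Hcont : continuous2 (D 0%nat 0%nat)) by apply HDc.
  destruct (Rle_dec 0 y) as [Hy0|Hy0].
  - rewrite Rabs_pos_eq in Hy by lra.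
    assert (Hreg : forall x, y - D0 <= x <= y + D0 -> L < Rabs x /\ Rp <= x).
    { intros x Hx1. rewrite Rabs_pos_eq by lra. split; lra. }
    rewrite Hghi by lra.
    pose proof (compare (D 0%nat 0%nat) (D 0%nat 1%nat) (D 1%nat 0%nat) (D 2%nat 0%nat) T y D0 (rho_hi + eps / 2)
      HT HD0 ltac:(lra) Hcont (fun t x => HDt 0%nat 0%nat t x) (fun t x => HDx 0%nat 0%nat t x) (fun t x => HDx 1%nat 0%nat t x)) as C1.
    pose proof (compare (fun t x => 1 - D 0%nat 0%nat t x) (fun t x => - D 0%nat 1%nat t x) (fun t x => - D 1%nat 0%nat t x)
      (fun t x => - D 2%nat 0%nat t x) T y D0 (1 - rho_hi + eps / 2)
      HT HD0 ltac:(lra) (cont2_om _ Hcont) (fun t x => dl_om _ _ _ (HDt 0%nat 0%nat t x))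
      (fun t x => dl_om _ _ _ (HDx 0%nat 0%nat t x)) (fun t x => dl_neg _ _ _ (HDx 1%nat 0%nat t x))) as C2.
    simpl in C1, C2.
    assert (U1 : D 0%nat 0%nat t y <= rho_hi + eps / 2 + t / (D0 * D0)).
    { apply C1; auto.
      - intros s x Hs Hx1. apply Hheat; auto. apply Hreg; auto.
      - intros s x Hs Hx1. pose proof (Hmu s x Hs). lra.
      - intros x Hx1. pose proof (abs_el _ _ (HRp x ltac:(apply Hreg; auto))). lra. }
    assert (U2 : 1 - D 0%nat 0%nat t y <= 1 - rho_hi + eps / 2 + t / (D0 * D0)).
    { apply C2; auto.
      - intros s x Hs Hx1. rewrite Hheat; [ring|auto|apply Hreg; auto].
      - intros s x Hs Hx1. pose proof (Hmu s x Hs). lra.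
      - intros x Hx1. pose proof (abs_el _ _ (HRp x ltac:(apply Hreg; auto))). lra. }
    apply Rabs_le; lra.
  - rewrite Rabs_left in Hy by lra.
    assert (Hreg : forall x, y - D0 <= x <= y + D0 -> L < Rabs x /\ Rm <= - x).
    { intros x Hx1. rewrite Rabs_left by lra. split; lra. }
    rewrite Hglo by lra.
    pose proof (compare (D 0%nat 0%nat) (D 0%nat 1%nat) (D 1%nat 0%nat) (D 2%nat 0%nat) T y D0 (rho_lo + eps / 2)
      HT HD0 ltac:(lra) Hcont (fun t x => HDt 0%nat 0%nat t x) (fun t x => HDx 0%nat 0%nat t x) (fun t x => HDx 1%nat 0%nat t x)) as C1.
    pose proof (compare (fun t x => 1 - D 0%nat 0%nat t x) (fun t x => - D 0%nat 1%nat t x) (fun t x => - D 1%nat 0%nat t x)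
      (fun t x => - D 2%nat 0%nat t x) T y D0 (1 - rho_lo + eps / 2)
      HT HD0 ltac:(lra) (cont2_om _ Hcont) (fun t x => dl_om _ _ _ (HDt 0%nat 0%nat t x))
      (fun t x => dl_om _ _ _ (HDx 0%nat 0%nat t x)) (fun t x => dl_neg _ _ _ (HDx 1%nat 0%nat t x))) as C2.
    simpl in C1, C2.
    assert (Hin : forall x, y - D0 <= x <= y + D0 -> Rabs (D 0%nat 0%nat 0 x - rho_lo) <= eps / 2).
    { intros x Hx1. pose proof (HRm (- x) ltac:(apply Hreg; auto)) as Q. rewrite Ropp_involutive in Q. exact Q. }
    assert (U1 : D 0%nat 0%nat t y <= rho_lo + eps / 2 + t / (D0 * D0)).
    { apply C1; auto.
      - intros s x Hs Hx1. apply Hheat; auto. apply Hreg; auto.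
      - intros s x Hs Hx1. pose proof (Hmu s x Hs). lra.
      - intros x Hx1. pose proof (abs_el _ _ (Hin x Hx1)). lra. }
    assert (U2 : 1 - D 0%nat 0%nat t y <= 1 - rho_lo + eps / 2 + t / (D0 * D0)).
    { apply C2; auto.
      - intros s x Hs Hx1. rewrite Hheat; [ring|auto|apply Hreg; auto].
      - intros s x Hs Hx1. pose proof (Hmu s x Hs). lra.
      - intros x Hx1. pose proof (abs_el _ _ (Hin x Hx1)). lra. }
    apply Rabs_le; lra.
Qed.
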